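(* For every finite simple graph $G$ there exists a (not necessarily connected) supergraceful graph $H$ containing a subgraph isomorphic to $G$.
   Context: For a graph $H$ with $p$ nodes and $q$ edges, a total labeling is a map $\varphi: V(H) \to \{1,\dots,p+q\}$ such that the $p$ node labels $\varphi(x)$ and the $q$ edge labels $|\varphi(x)-\varphi(y)|$, $xy \in E(H)$, are all pairwise distinct, together forming exactly $\{1,\dots,p+q\}$; $H$ is supergraceful if it admits a total labeling. *)

(* Defs.v *)
From mathcomp Require Import all_boot.
Set Implicit Arguments. Unset Strict Implicit. Unset Printing Implicit Defensive.

Record sgraph := SGraph {
  svert : finType;
  sadj : rel svert;
  sadj_sym : symmetric sadj;
  sadj_irr : irreflexive sadj }.

(* Edges, each unordered edge {x,y} listed once, as the ordered pair (x,y)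
   with enum_rank x < enum_rank y. *)
Definition edges (H : sgraph) : seq (svert H * svert H) :=
  [seq xy <- [seq (x, y) | x <- enum (svert H), y <- enum (svert H)]
     | sadj xy.1 xy.2 && (enum_rank xy.1 < enum_rank xy.2)].

Definition absdiff (a b : nat) : nat := if a <= b then b - a else a - b.

(* phi is a total (supergraceful) labeling of H: the p vertex labels and the
   q edge labels |phi x - phi y| are pairwise distinct and together form
   exactly {1, ..., p+q}. *)
Definition total_labeling (H : sgraph) (phi : svert H -> nat) : Prop :=
  perm_eq ([seq phi x | x <- enum (svert H)]
           ++ [seq absdiff (phi xy.1) (phi xy.2) | xy <- edges H])
          (iota 1 (#|svert H| + size (edges H))).

Definition supergraceful (H : sgraph) : Prop :=
  exists phi : svert H -> nat, total_labeling phi.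

Definition has_subgraph_iso (H G : sgraph) : Prop :=
  exists f : svert G -> svert H,
    injective f /\ forall x y : svert G, sadj x y -> sadj (f x) (f y).

(* Main.v *)
Require Import Defs.
From mathcomp Require Import all_boot.
From mathcomp Require Import zify.
Set Implicit Arguments. Unset Strict Implicit. Unset Printing Implicit Defensive.

Lemma lo3 i j : i < j -> 3^(j.-1) < 3^j - 3^i /\ 3^j - 3^i < 3^j.
Proof.
case: j => // j' /=; rewrite ltnS => hij.
have h1: 3^i <= 3^j' by rewrite leq_exp2l.
have h2: 0 < 3^i by rewrite expn_gt0.
rewrite expnS; lia.
Qed.

Lemma diff_inj i j k l : i < j -> k < l -> 3^j - 3^i = 3^l - 3^k -> i = k /\ j = l.
Proof.
move=> hij hkl e.
have [a b] := lo3 hij; have [c d] := lo3 hkl.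
have jl : j = l.
  case: (ltngtP j l) => // h.
  - have : 3^j <= 3^(l.-1) by rewrite leq_exp2l // -ltnS prednK //; lia.
    lia.
  - have : 3^l <= 3^(j.-1) by rewrite leq_exp2l // -ltnS prednK //; lia.
    lia.
subst l.
have hi : 3^i < 3^j by rewrite ltn_exp2l.
have hk : 3^k < 3^j by rewrite ltn_exp2l.
split => //; apply: (expnI (isT : 1 < 3)); lia.
Qed.

Lemma diff_pow i j k : i < j -> 3^j - 3^i <> 3^k.
Proof.
move=> hij e; have [a b] := lo3 hij.
case: (leqP j k) => h.
- have : 3^j <= 3^k by rewrite leq_exp2l. lia.
- have : 3^k <= 3^(j.-1) by rewrite leq_exp2l // -ltnS prednK //; lia.
  lia.
Qed.

Lemma absdiffC a b : absdiff a b = absdiff b a.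
Proof. rewrite /absdiff; case: (leqP a b) => h1; case: (leqP b a) => h2 //; lia. Qed.

Lemma absdiff_lt a b : a < b -> absdiff a b = b - a.
Proof. by rewrite /absdiff => /ltnW ->. Qed.

Section Constr.
Variable n : nat.

Definition inS (x : nat) : bool :=
  [exists i : 'I_n, x == 3^i] ||
  [exists i : 'I_n, exists j : 'I_n, (i < j) && (x == 3^j - 3^i)].

Definition MM := 3^n.
Definition fillP (k : 'I_MM.+1) : bool := (0 < k) && ~~ inS k.
Definition fillT := {k : 'I_MM.+1 | fillP k}.
Definition VV := ('I_n + fillT)%type.
Definition adjH (u v : VV) : bool :=
  match u, v with inl i, inl j => i != j | _, _ => false end.
Lemma adjH_sym : symmetric adjH.
Proof. by case=> [i|k] [j|l] //=; rewrite eq_sym. Qed.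
Lemma adjH_irr : irreflexive adjH.
Proof. by case=> [i|k] //=; rewrite eqxx. Qed.
Definition HH := SGraph adjH_sym adjH_irr.
Definition phi (u : VV) : nat := match u with inl i => 3^i | inr k => val (val k) end.

Lemma edgesP (e : VV * VV) : e \in edges HH ->
  exists i j : 'I_n, [/\ i != j, e = (inl i, inl j) & enum_rank e.1 < enum_rank e.2].
Proof.
rewrite /edges mem_filter => /andP [/andP [ad rk] _].
case: e ad rk => [[i|k] [j|l]] //= ad rk.
by exists i, j.
Qed.

Lemma edge_lab (e : VV * VV) : e \in edges HH ->
  exists i j : 'I_n, i < j /\ absdiff (phi e.1) (phi e.2) = 3^j - 3^i.
Proof.
case/edgesP => i [j [ne -> _]] /=.
case: (ltngtP i j) => h.
- by exists i, j; split => //; rewrite absdiff_lt // ltn_exp2l.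
- by exists j, i; split => //; rewrite absdiffC absdiff_lt // ltn_exp2l.
- by move: ne; rewrite (val_inj h) eqxx.
Qed.

Lemma phi_inj : injective phi.
Proof.
case=> [i|[k kP]] [j|[l lP]] /= e.
- by congr inl; apply: val_inj; apply: (expnI (isT : 1 < 3)).
- exfalso; move: lP; rewrite /fillP -e => /andP [_ /negP []].
  by rewrite /inS; apply/orP; left; apply/existsP; exists i.
- exfalso; move: kP; rewrite /fillP e => /andP [_ /negP []].
  by rewrite /inS; apply/orP; left; apply/existsP; exists j.
- by congr inr; apply: val_inj; apply: val_inj.
Qed.

Definition LL := [seq phi x | x <- enum (svert HH)]
           ++ [seq absdiff (phi xy.1) (phi xy.2) | xy <- edges HH].

Lemma edges_uniq : uniq (edges HH).
Proof.
rewrite /edges filter_uniq // allpairs_uniq ?enum_uniq //.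
by move=> [a b] [c d] _ _ /= [-> ->].
Qed.

Lemma LL_uniq : uniq LL.
Proof.
rewrite /LL cat_uniq; apply/and3P; split.
- by rewrite map_inj_uniq ?enum_uniq //; exact: phi_inj.
- apply/hasPn => x /mapP [e eE ->] /=; apply/negP => /mapP [u _].
  case: (edge_lab eE) => i [j [ij ->]].
  case: u => [k|[k kP]] /= e2.
  + exact: (diff_pow ij e2).
  + move: kP; rewrite /fillP -e2 => /andP [_ /negP []].
    rewrite /inS; apply/orP; right; apply/existsP; exists i; apply/existsP; exists j.
    by rewrite ij eqxx.
- rewrite map_inj_in_uniq ?edges_uniq //.
  move=> e f eE fE.
  have key : forall x y : 'I_n, x != y -> exists p q : 'I_n,
    [/\ p < q, absdiff (3^x) (3^y) = 3^q - 3^p & ((p, q) = (x, y) \/ (p, q) = (y, x))].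
    move=> x y nxy; case: (ltngtP x y) => h.
    - by exists x, y; split => //; [rewrite absdiff_lt // ltn_exp2l | left].
    - by exists y, x; split => //; [rewrite absdiffC absdiff_lt // ltn_exp2l | right].
    - by move: nxy; rewrite (val_inj h) eqxx.
  case/edgesP: eE => a [b [nab -> /= rab]]; case/edgesP: fE => c [d [ncd -> /= rcd]] /= e3.
  case: (key _ _ nab) => p [q [pq E1 O1]]; case: (key _ _ ncd) => p' [q' [pq' E2 O2]].
  rewrite E1 E2 in e3; case: (diff_inj pq pq' e3) => /val_inj ep /val_inj eq.
  subst p' q'.
  case: O1 => [[? ?]|[? ?]]; case: O2 => [[? ?]|[? ?]]; subst => //;
    exfalso; first [move: (ltn_trans rab rcd) | move: (ltn_trans rcd rab)]; by rewrite ltnn.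
Qed.

Lemma LL_mem x : (x \in LL) = (0 < x <= MM).
Proof.
apply/idP/idP.
- rewrite mem_cat => /orP [/mapP [u _ ->]|/mapP [e eE ->]].
  + case: u => [i|[k kP]] /=.
    * by rewrite expn_gt0 /= /MM leq_exp2l // ltnW.
    * move: kP; rewrite /fillP => /andP [k0 _]; rewrite k0 /= -ltnS; exact: ltn_ord.
  + case: (edge_lab eE) => i [j [ij ->]]; have [a b] := lo3 ij.
    have : 3^j <= MM by rewrite /MM leq_exp2l // ltnW.
    lia.
- move=> /andP [x0 xM].
  case hS : (inS x).
  + move: hS; rewrite /inS => /orP [/existsP [i /eqP ->]|/existsP [i /existsP [j /andP [ij /eqP ->]]]].
    * by rewrite mem_cat; apply/orP; left; apply/mapP; exists (inl i : VV); rewrite ?mem_enum.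
    * rewrite mem_cat; apply/orP; right; apply/mapP.
      have nij : (inl i : VV) != inl j.
        by apply/eqP => [[h]]; move: ij; rewrite h ltnn.
      have hi : 3^i < 3^j by rewrite ltn_exp2l.
      case: (ltngtP (enum_rank (inl i : VV)) (enum_rank (inl j : VV))) => r.
      - exists ((inl i : VV), (inl j : VV)); last by rewrite /= absdiff_lt.
        rewrite /edges mem_filter /= r andbT; apply/andP; split.
          by apply/eqP => h; move: ij; rewrite h ltnn.
        by apply: allpairs_f; rewrite mem_enum.
      - exists ((inl j : VV), (inl i : VV)); last by rewrite /= absdiffC absdiff_lt.
        rewrite /edges mem_filter /= r andbT; apply/andP; split.
          by apply/eqP => h; move: ij; rewrite h ltnn.
        by apply: allpairs_f; rewrite mem_enum.
      - by move: nij; rewrite -(enum_rankK (inl i : VV)) (val_inj r) enum_rankK eqxx.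
  + have xM' : x < MM.+1 by [].
    have kP : fillP (Ordinal xM') by rewrite /fillP /= x0 hS.
    rewrite mem_cat; apply/orP; left; apply/mapP.
    by exists (inr (exist _ (Ordinal xM') kP) : VV); rewrite ?mem_enum.
Qed.

Lemma HH_sg : supergraceful HH.
Proof.
exists phi; rewrite /total_labeling -/LL.
have p : perm_eq LL (iota 1 MM).
  apply: uniq_perm; rewrite ?LL_uniq ?iota_uniq // => x.
  by rewrite LL_mem mem_iota add1n ltnS.
have : size LL = #|svert HH| + size (edges HH).
  by rewrite /LL size_cat !size_map cardT enumT.
move=> e; rewrite -e (perm_size p) size_iota; exact: p.
Qed.

End Constr.

Theorem theorem8p7 (G : sgraph) :
  exists H : sgraph, supergraceful H /\ has_subgraph_iso H G.
Proof.
exists (HH #|svert G|); split; first exact: HH_sg.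
exists (fun x => inl (enum_rank x) : VV #|svert G|); split.
- by move=> x y [/enum_rank_inj].
- move=> x y /= axy; apply/eqP => /enum_rank_inj exy; subst y.
  by rewrite (sadj_irr x) in axy.
Qed.
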